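(* Let $H$ be a finite-dimensional complex Hilbert space, $h_1,h_2$ subspaces of $H$, $\ket s\in H$ a unit vector, and $p[\Pi(h)]=\bra s\Pi(h)\ket s$. Set $S=p[\Pi(h_1)]+p[\Pi(h_2)]+\bra s\mathfrak D(h_1,h_2)\ket s$, $\mathfrak B_U=S$ and, when $p[\Pi(h_1\vee h_2)]>0$, $\mathfrak B_L=\dfrac{S^2}{S+2p[\Pi(h_1\wedge h_2)]}$. Then (1) $p[\Pi(h_1\vee h_2)]\le \mathfrak B_U$, and if $p[\Pi(h_1\vee h_2)]>0$ then $\mathfrak B_L\le p[\Pi(h_1\vee h_2)]$. (2) If at least one of the following holds: (i) $\Pi(h_1)$ and $\Pi(h_2)$ commute; (ii) $\ket s\in h_1\wedge h_2$; (iii) $\ket s\in (h_1\vee h_2)^\perp=h_1^\perp\wedge h_2^\perp$; then $\bra s\mathfrak D(h_1,h_2)\ket s=0$ and the classical Boole inequality $p[\Pi(h_1\vee h_2)]\le p[\Pi(h_1)]+p[\Pi(h_2)]$ holds, and moreover, whenever $p[\Pi(h_1)]+p[\Pi(h_2)]+2p[\Pi(h_1\wedge h_2)]>0$, the classical Chung–Erdős inequality $\dfrac{(p[\Pi(h_1)]+p[\Pi(h_2)])^2}{p[\Pi(h_1)]+p[\Pi(h_2)]+2p[\Pi(h_1\wedge h_2)]}\le p[\Pi(h_1\vee h_2)]$ holds.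
   Context: For subspaces $h,h'$ of $H$: $h\wedge h'=h\cap h'$, $h\vee h'=\mathrm{span}(h\cup h')$, $h^\perp$ is the orthogonal complement, and $\Pi(h)$ is the orthogonal projector onto $h$. Define the operator $\mathfrak D(h_1,h_2)=\Pi(h_1\vee h_2)-\Pi(h_1)-\Pi(h_2)+\Pi(h_1\wedge h_2)$. *)

(* Defs.v *)
From HB Require Import structures.
From mathcomp Require Import all_boot all_order all_algebra.
Set Implicit Arguments. Unset Strict Implicit. Unset Printing Implicit Defensive.
Import Order.TTheory GRing.Theory Num.Theory.
Local Open Scope ring_scope.

(* The finite-dimensional complex Hilbert space H is modelled as the row
   vectors 'rV[C]_n over a numeric algebraically closed field C (e.g. algC),
   with the standard inner product <u,v> = \sum_i u_i (v_i)^*.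
   Subspaces of H are represented (as in mxalgebra) by the row space of a
   matrix h : 'M[C]_n.  Operators act on row vectors on the right. *)

Section Defs.
Variable C : numClosedFieldType.
Variable n : nat.

Definition adjmx (m p : nat) (A : 'M[C]_(m, p)) : 'M[C]_(p, m) :=
  map_mx (@Num.conj C) A^T.

Definition meet (h h' : 'M[C]_n) : 'M[C]_n := (h :&: h')%MS.
Definition join (h h' : 'M[C]_n) : 'M[C]_n := (h + h')%MS.

Definition ocompl (h : 'M[C]_n) : 'M[C]_n := orthomx (@Num.conj C) 1%:M h.

Definition Pi (h : 'M[C]_n) : 'M[C]_n := proj_ortho h.

Definition Dop (h1 h2 : 'M[C]_n) : 'M[C]_n :=
  Pi (join h1 h2) - Pi h1 - Pi h2 + Pi (meet h1 h2).

Definition braket (s : 'rV[C]_n) (A : 'M[C]_n) : C :=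
  (s *m A *m adjmx s) 0 0.

Definition prob (s : 'rV[C]_n) (h : 'M[C]_n) : C := braket s (Pi h).

End Defs.

(* Main.v *)
Require Import Defs.
From HB Require Import structures.
From mathcomp Require Import all_boot all_order all_algebra.
From mathcomp Require Import ring.
Import Order.TTheory GRing.Theory Num.Theory.
Set Implicit Arguments. Unset Strict Implicit. Unset Printing Implicit Defensive.
Local Open Scope ring_scope.

Section Aux.
Variable C : numClosedFieldType.
Variable n : nat.
Implicit Types (U V : 'M[C]_n).

Lemma adjmxM m p q (A : 'M[C]_(m, p)) (B : 'M[C]_(p, q)) :
  adjmx (A *m B) = adjmx B *m adjmx A.
Proof. by rewrite /adjmx trmx_mul map_mxM. Qed.

Lemma adjmxD m p (A B : 'M[C]_(m, p)) : adjmx (A + B) = adjmx A + adjmx B.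
Proof. by apply/matrixP => i j; rewrite !mxE rmorphD. Qed.

Lemma adjmxN m p (A : 'M[C]_(m, p)) : adjmx (- A) = - adjmx A.
Proof. by apply/matrixP => i j; rewrite !mxE rmorphN. Qed.

Lemma adjmxB m p (A B : 'M[C]_(m, p)) : adjmx (A - B) = adjmx A - adjmx B.
Proof. by rewrite adjmxD adjmxN. Qed.

Definition nrm (w : 'rV[C]_n) : C := (w *m adjmx w) 0 0.

Lemma nrm_ge0 w : 0 <= nrm w.
Proof.
rewrite /nrm mxE; apply: sumr_ge0 => i _; rewrite !mxE; exact: mul_conjC_ge0.
Qed.

Lemma subm_sub m1 m2 (A B : 'M[C]_(m1, n)) (D : 'M[C]_(m2, n)) :
  (A <= D)%MS -> (B <= D)%MS -> (A - B <= D)%MS.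
Proof. by move=> hA hB; apply: addmx_sub => //; rewrite (eqmx_opp B). Qed.

Lemma ortho_ab m1 m2 U (a : 'M[C]_(m1, n)) (b : 'M[C]_(m2, n)) :
  (a <= U)%MS -> (b <= ocompl U)%MS -> b *m adjmx a = 0.
Proof.
move=> aU bU; apply/orthomx1P.
by apply: submx_trans bU _; rewrite submx_ortho.
Qed.

Lemma ortho_ba m1 m2 U (a : 'M[C]_(m1, n)) (b : 'M[C]_(m2, n)) :
  (a <= U)%MS -> (b <= ocompl U)%MS -> a *m adjmx b = 0.
Proof.
move=> aU bU; apply/orthomx1P; rewrite orthomx_sym.
by apply: submx_trans bU _; rewrite submx_ortho.
Qed.

Lemma nrmD U (a b : 'rV[C]_n) :
  (a <= U)%MS -> (b <= ocompl U)%MS -> nrm (a + b) = nrm a + nrm b.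
Proof.
move=> a1 b1.
rewrite /nrm adjmxD mulmxDl !mulmxDr (ortho_ab a1 b1) (ortho_ba a1 b1).
by rewrite addr0 add0r mxE.
Qed.

Lemma pythag U (w : 'rV[C]_n) :
  nrm w = nrm (w *m Pi U) + nrm (w - w *m Pi U).
Proof.
have a1 : (w *m Pi U <= U)%MS by apply: proj_ortho_sub.
have b1 : (w - w *m Pi U <= ocompl U)%MS by apply: proj_ortho_compl_sub.
by rewrite -(nrmD a1 b1) addrC subrK.
Qed.

Lemma ocomplC (A B : 'M[C]_n) :
  (A <= ocompl B)%MS = (B <= ocompl A)%MS.
Proof. exact: orthomx_sym. Qed.

Lemma ocomplS U V : (U <= V)%MS -> (ocompl V <= ocompl U)%MS.
Proof. by move=> UV; rewrite submx_ortho. Qed.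

Lemma prob_nrm (s : 'rV[C]_n) U : prob s U = nrm (s *m Pi U).
Proof.
have a1 : (s *m Pi U <= U)%MS by apply: proj_ortho_sub.
have b1 : (s - s *m Pi U <= ocompl U)%MS by apply: proj_ortho_compl_sub.
rewrite /prob /braket /nrm.
have -> : adjmx s = adjmx (s *m Pi U) + adjmx (s - s *m Pi U).
  by rewrite -adjmxD addrC subrK.
by rewrite mulmxDr (ortho_ba a1 b1) addr0.
Qed.

Lemma prob_ge0 (s : 'rV[C]_n) U : 0 <= prob s U.
Proof. by rewrite prob_nrm nrm_ge0. Qed.

Lemma nrm_proj_le U (w : 'rV[C]_n) : nrm (w *m Pi U) <= nrm w.
Proof. by rewrite [X in _ <= X](pythag U) lerDl nrm_ge0. Qed.

Lemma prob_mono (s : 'rV[C]_n) U V : (U <= V)%MS -> prob s U <= prob s V.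
Proof.
move=> UV; rewrite !prob_nrm.
have -> : s *m Pi U = (s *m Pi V) *m Pi U.
  have b1 : (s - s *m Pi V <= ocompl U)%MS.
    exact: submx_trans (proj_ortho_compl_sub _ _) (ocomplS UV).
  have := proj_ortho_0 b1; rewrite mulmxBl => /eqP; rewrite subr_eq0 => /eqP.
  by [].
exact: nrm_proj_le.
Qed.

Lemma Pi_unique U (Q : 'M[C]_n) :
  (Q <= U)%MS -> (1%:M - Q <= ocompl U)%MS -> Pi U = Q.
Proof.
move=> h1 h2; rewrite -[Pi U]mul1mx -[1%:M](subrK Q) mulmxDl.
by rewrite (proj_ortho_0 h2) (proj_ortho_id h1) add0r.
Qed.

Lemma ocompl_cap (X : 'M[C]_n) U V :
  (X <= ocompl U)%MS -> (X <= ocompl V)%MS -> (X <= ocompl (join U V))%MS.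
Proof.
rewrite ocomplC => hU; rewrite ocomplC => hV; rewrite ocomplC.
by rewrite /join addsmx_sub hU hV.
Qed.

Lemma Pi_comm U V : Pi U *m Pi V = Pi V *m Pi U ->
  Pi (join U V) + Pi (meet U V) = Pi U + Pi V.
Proof.
move=> comm.
have PUs : (Pi U <= U)%MS by have := proj_ortho_sub U (1%:M : 'M[C]_n); rewrite mul1mx.
have PVs : (Pi V <= V)%MS by have := proj_ortho_sub V (1%:M : 'M[C]_n); rewrite mul1mx.
have cUs : (1%:M - Pi U <= ocompl U)%MS.
  by have := proj_ortho_compl_sub U (1%:M : 'M[C]_n); rewrite mul1mx.
have cVs : (1%:M - Pi V <= ocompl V)%MS.
  by have := proj_ortho_compl_sub V (1%:M : 'M[C]_n); rewrite mul1mx.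
have UVV : (Pi U *m Pi V <= V)%MS by apply: proj_ortho_sub.
have UVU : (Pi U *m Pi V <= U)%MS by rewrite comm proj_ortho_sub.
have jU : (U <= join U V)%MS by apply: addsmxSl.
have jV : (V <= join U V)%MS by apply: addsmxSr.
have mU : (meet U V <= U)%MS by apply: capmxSl.
have mV : (meet U V <= V)%MS by apply: capmxSr.
have -> : Pi (meet U V) = Pi U *m Pi V.
  apply: Pi_unique; first by rewrite sub_capmx UVU UVV.
  rewrite -[1%:M](subrK (Pi U)) -addrA; apply: addmx_sub.
    exact: submx_trans cUs (ocomplS mU).
  apply: submx_trans (ocomplS mV).
  exact: proj_ortho_compl_sub.
have zm : forall x a b c : 'M[C]_n, x - (a + b - c) = (x - a) - (b - c).
  by move=> x a b c; rewrite !opprD !opprK !addrA.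
have -> : Pi (join U V) = Pi U + Pi V - Pi U *m Pi V.
  apply: Pi_unique.
    apply: subm_sub; last exact: submx_trans UVV jV.
    by apply: addmx_sub; [exact: submx_trans PUs jU | exact: submx_trans PVs jV].
  apply: ocompl_cap.
    rewrite [Pi U + Pi V]addrC zm comm -{1}[Pi U]mul1mx -mulmxBl.
    exact: proj_ortho_compl_sub.
  rewrite zm -{1}[Pi V]mul1mx -mulmxBl.
  exact: proj_ortho_compl_sub.
by rewrite subrK.
Qed.

Lemma brD (s : 'rV[C]_n) (A B : 'M[C]_n) : braket s (A + B) = braket s A + braket s B.
Proof. by rewrite /braket mulmxDr mulmxDl mxE. Qed.

Lemma brN (s : 'rV[C]_n) (A : 'M[C]_n) : braket s (- A) = - braket s A.
Proof. by rewrite /braket mulmxN mulNmx mxE. Qed.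

Lemma brD_eq (s : 'rV[C]_n) h1 h2 : braket s (Dop h1 h2) =
  prob s (join h1 h2) - prob s h1 - prob s h2 + prob s (meet h1 h2).
Proof. by rewrite /Dop !brD !brN. Qed.

Lemma br_id (s : 'rV[C]_n) U : (s <= U)%MS -> braket s (Pi U) = (s *m adjmx s) 0 0.
Proof. by move=> sU; rewrite /braket (proj_ortho_id sU). Qed.

Lemma br_0 (s : 'rV[C]_n) U : (s <= ocompl U)%MS -> braket s (Pi U) = 0.
Proof. by move=> sU; rewrite /braket (proj_ortho_0 sU) mul0mx mxE. Qed.
End Aux.

Lemma bound (C : numClosedFieldType) (a b : C) :
  0 <= b -> b <= a -> 0 < a + b + 2 * b -> (a + b) ^+ 2 / (a + b + 2 * b) <= a.
Proof.
move=> b0 ba d0; rewrite ler_pdivrMr // -subr_ge0.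
have -> : a * (a + b + 2 * b) - (a + b) ^+ 2 = b * (a - b) by ring.
by rewrite mulr_ge0 // subr_ge0.
Qed.

Theorem mainTheorem3 (C : numClosedFieldType) (n : nat)
  (h1 h2 : 'M[C]_n) (s : 'rV[C]_n) :
  (s *m adjmx s) 0 0 = 1 ->
  let S := prob s h1 + prob s h2 + braket s (Dop h1 h2) in
  let BU := S in
  let BL := S ^+ 2 / (S + 2 * prob s (meet h1 h2)) in
  (prob s (join h1 h2) <= BU /\
   (0 < prob s (join h1 h2) -> BL <= prob s (join h1 h2))) /\
  ([\/ Pi h1 *m Pi h2 = Pi h2 *m Pi h1,
       (s <= meet h1 h2)%MS
     | (s <= ocompl (join h1 h2))%MS] ->
   [/\ braket s (Dop h1 h2) = 0,
       prob s (join h1 h2) <= prob s h1 + prob s h2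
     & 0 < prob s h1 + prob s h2 + 2 * prob s (meet h1 h2) ->
       (prob s h1 + prob s h2) ^+ 2
         / (prob s h1 + prob s h2 + 2 * prob s (meet h1 h2))
       <= prob s (join h1 h2)]).
Proof.
move=> hs S BU BL.
have eD := brD_eq s h1 h2.
have eS : S = prob s (join h1 h2) + prob s (meet h1 h2) by rewrite /S eD; ring.
have b0 := prob_ge0 s (meet h1 h2).
have ba : prob s (meet h1 h2) <= prob s (join h1 h2).
  by apply: prob_mono; apply: submx_trans (capmxSl _ _) (addsmxSl _ _).
split.
  split; first by rewrite /BU eS lerDl.
  move=> ha; rewrite /BL eS; apply: bound => //.
  apply: (lt_le_trans ha); rewrite -addrA lerDl addr_ge0 // mulr_ge0 //.
have D0 : [\/ Pi h1 *m Pi h2 = Pi h2 *m Pi h1,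
       (s <= meet h1 h2)%MS
     | (s <= ocompl (join h1 h2))%MS] -> braket s (Dop h1 h2) = 0.
  case=> [c|sm|sj].
  - have e := congr1 (braket s) (Pi_comm c); rewrite !brD in e.
    rewrite eD.
    have -> : prob s (join h1 h2) - prob s h1 - prob s h2 + prob s (meet h1 h2)
      = (prob s (join h1 h2) + prob s (meet h1 h2)) - (prob s h1 + prob s h2) by ring.
    by rewrite /prob e subrr.
  - have s1 : (s <= h1)%MS by apply: submx_trans sm (capmxSl _ _).
    have s2 : (s <= h2)%MS by apply: submx_trans sm (capmxSr _ _).
    have sj : (s <= join h1 h2)%MS by apply: submx_trans s1 (addsmxSl _ _).
    rewrite eD /prob !br_id // hs; ring.
  - have s1 : (s <= ocompl h1)%MS by apply: submx_trans sj (ocomplS (addsmxSl _ _)).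
    have s2 : (s <= ocompl h2)%MS by apply: submx_trans sj (ocomplS (addsmxSr _ _)).
    have sm : (s <= ocompl (meet h1 h2))%MS by apply: submx_trans s1 (ocomplS (capmxSl _ _)).
    by rewrite eD /prob !br_0 // subrr !sub0r oppr0 addr0.
move=> H; have d0 := D0 H.
have e12 : prob s h1 + prob s h2 = prob s (join h1 h2) + prob s (meet h1 h2).
  apply/eqP; rewrite -subr_eq0.
  have -> : prob s h1 + prob s h2 - (prob s (join h1 h2) + prob s (meet h1 h2))
    = - (prob s (join h1 h2) - prob s h1 - prob s h2 + prob s (meet h1 h2)) by ring.
  by rewrite -eD d0 oppr0.
split => //; first by rewrite e12 lerDl.
by rewrite e12 => hd; apply: bound.
Qed.
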